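(* Let $h_1,\dots,h_p$ be bilinear forms on $V$. Then $$c(h_1\cdots h_p)=\sum_i(c\,h_i)\,h_1\cdots\hat h_i\cdots h_p-\sum_{i<j}(h_j\circ h_i+h_i\circ h_j)\,h_1\cdots\hat h_i\cdots\hat h_j\cdots h_p,$$ where a hat denotes omission. In particular, for a bilinear form $k$ on $V$, $$c\,k^p=p\,(c\,k)\,k^{p-1}-p(p-1)(k\circ k)\,k^{p-2}.$$
   Context: $(V,g)$ is a Euclidean real vector space of dimension $n$ with orthonormal basis $(e_i)$, identified with $V^*$ via $g$. Double forms: elements of $\bigoplus_{p,q}\Lambda^pV^*\otimes\Lambda^qV^*$, a $(p,q)$ double form viewed as a multilinear form $\omega(x_1,\dots,x_p;y_1,\dots,y_q)$ skew in the $x$'s and in the $y$'s; bilinear forms on $V$ are $(1,1)$ double forms. Exterior product: $(\theta_1\otimes\theta_2)(\theta_3\otimes\theta_4)=(\theta_1\wedge\theta_3)\otimes(\theta_2\wedge\theta_4)$, extended bilinearly ($k^0=1$). Composition product: $(\theta_1\otimes\theta_2)\circ(\theta_3\otimes\theta_4)=\langle\theta_1,\theta_4\rangle\theta_3\otimes\theta_2$, extended bilinearly (for bilinear forms this corresponds to composition of the associated endomorphisms). The contraction $c$ is $c\omega(x_1,\dots,x_{p-1};y_1,\dots,y_{q-1})=\sum_j\omega(e_j,x_1,\dots,x_{p-1};e_j,y_1,\dots,y_{q-1})$ ($c\omega=0$ if $p=0$ or $q=0$); for a bilinear form $h$, $c\,h$ is its trace. *)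

(* Defs.v *)
(* V = 'rV[R]_n with the standard (orthonormal) basis. *)
From HB Require Import structures.
From mathcomp Require Import all_boot all_order all_algebra.
Set Implicit Arguments. Unset Strict Implicit. Unset Printing Implicit Defensive.
Import Order.TTheory GRing.Theory Num.Theory.
Local Open Scope ring_scope.

Section DoubleForms.
Variables (R : realFieldType) (n : nat).

Notation V := 'rV[R]_n.

(* A (p,q) double form is represented by the multilinear function
   omega(x_1..x_p ; y_1..y_q); we use functions on sequences of vectors and
   only ever evaluate a (p,q) form on sequences of sizes p and q. *)
Definition dform := seq V -> seq V -> R.

Definition ebasis (j : 'I_n) : V := delta_mx 0 j.

(* the bilinear form h(x,y) = x h y^T attached to a matrix h : h a b = h(e_a,e_b) *)
Definition bform (h : 'M[R]_n) : dform :=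
  fun xs ys => (nth 0 xs 0 *m h *m (nth 0 ys 0)^T) 0 0.

(* composition product of bilinear forms:
   (theta1 (x) theta2) o (theta3 (x) theta4) = <theta1,theta4> theta3 (x) theta2,
   i.e. (h o k)(x,y) = sum_j k(x,e_j) h(e_j,y), whose matrix is k *m h *)
Definition bcomp (h k : 'M[R]_n) : 'M[R]_n := k *m h.

(* sign of the shuffle permutation putting the (sorted) positions of A first:
   (-1)^(number of pairs a in A, b notin A with b < a) *)
Definition shuffle_sign N (A : {set 'I_N}) : R :=
  (-1) ^+ #|[set ab : 'I_N * 'I_N | (ab.1 \in A) && (ab.2 \notin A) && (ab.2 < ab.1)%N]|.

Definition subseq_at (xs : seq V) N (A : {set 'I_N}) : seq V :=
  [seq nth 0 xs (nat_of_ord i) | i <- enum A].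

(* exterior product of a (p,q) double form w with a (r,s) double form t,
   i.e. the bilinear extension of
   (th1 (x) th2)(th3 (x) th4) = (th1 /\ th3) (x) (th2 /\ th4),
   with (a /\ b)(x_1..x_{p+r}) = sum over shuffles sgn * a(..) b(..). *)
Definition dprod (p q : nat) (w t : dform) : dform :=
  fun xs ys =>
    \sum_(A : {set 'I_(size xs)} | #|A| == p)
    \sum_(B : {set 'I_(size ys)} | #|B| == q)
      shuffle_sign A * shuffle_sign B *
      w (subseq_at xs A) (subseq_at ys B) *
      t (subseq_at xs (~: A)) (subseq_at ys (~: B)).

Definition dunit : dform := fun _ _ => 1.

Definition dprods (hs : seq 'M[R]_n) : dform :=
  foldr (fun h w => dprod 1 1 (bform h) w) dunit hs.

Definition dpow (k : 'M[R]_n) (m : nat) : dform := dprods (nseq m k).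

Definition dcontr (p q : nat) (w : dform) : dform :=
  fun xs ys => if (0 < p)%N && (0 < q)%N then
      \sum_(j < n) w (ebasis j :: xs) (ebasis j :: ys) else 0.

Definition deq (p q : nat) (w t : dform) : Prop :=
  forall xs ys : seq V, size xs = p -> size ys = q -> w xs ys = t xs ys.

End DoubleForms.

(* Main.v *)
Require Import Defs.
From HB Require Import structures.
From mathcomp Require Import all_boot all_order all_algebra.
From mathcomp Require Import ring zify.
Set Implicit Arguments. Unset Strict Implicit. Unset Printing Implicit Defensive.
Import Order.TTheory GRing.Theory Num.Theory.

Definition del (T : Type) (i : nat) (s : seq T) := take i s ++ drop i.+1 s.

Lemma del0 T (x : T) s : del 0 (x :: s) = s. Proof. by rewrite /del /= drop0. Qed.
Lemma delS T (x : T) i s : del i.+1 (x :: s) = x :: del i s. Proof. by []. Qed.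
Lemma del_nil T i : del i ([::] : seq T) = [::]. Proof. by case: i. Qed.

Lemma nth_del T (x0 : T) i s k : nth x0 (del i s) k = nth x0 s (bump i k).
Proof.
elim: s i k => [|x s IH] i k; first by rewrite del_nil !nth_nil.
case: i => [|i]; first by rewrite del0 /bump leq0n add1n.
rewrite delS; case: k => [|k] //=.
by rewrite IH /bump ltnS addnS.
Qed.

Lemma size_del T i (s : seq T) : i < size s -> size (del i s) = (size s).-1.
Proof.
move=> Hi; rewrite /del size_cat size_take size_drop Hi.
by move: Hi; case: (size s) => // m Hm; rewrite subSS subnKC.
Qed.

Lemma del_del T i k (s : seq T) : i <= k -> del k (del i s) = del i (del k.+1 s).
Proof.
elim: s i k => [|x s IH] i k Hik; first by rewrite !del_nil.
case: i Hik => [|i] Hik; first by rewrite delS !del0.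
case: k Hik => [|k] // Hik.
by rewrite !delS IH.
Qed.

Lemma map_del T U (f : T -> U) i s : map f (del i s) = del i (map f s).
Proof. by rewrite /del map_cat map_take map_drop. Qed.

Lemma del_uniq (T : eqType) (x0 : T) i s : uniq s -> i < size s ->
  del i s = filter (predC1 (nth x0 s i)) s.
Proof.
move=> Us Hi.
have E := cat_take_drop i s.
rewrite (drop_nth x0 Hi) in E.
set y0 := nth x0 s i in E *.
rewrite -{2}E filter_cat /= eqxx /=.
move: Us; rewrite -{1}E cat_uniq /= => /and4P[_ Hn Hn2 _].
move: Hn; rewrite negb_or => /andP[Hn1 _].
rewrite /del; congr (_ ++ _); apply/esym/all_filterP/allP => y Hy /=;
 apply/eqP=> Ey; subst y; [by rewrite Hy in Hn1 |].
by rewrite Hy in Hn2.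
Qed.


Section Signs.
Variable R : comNzRingType.
Local Open Scope ring_scope.

Lemma RB (g : nat -> R) i M : (i <= M)%N ->
  \sum_(0 <= k < M) g (bump i k) =
  \sum_(0 <= j < M.+1) (if j != i then g j else 0).
Proof.
elim: M => [|M IH] Hi.
  by rewrite big_geq // big_nat1; move: Hi; rewrite leqn0 => /eqP->.
move: Hi; rewrite leq_eqVlt => /orP[/eqP->|Hi].
  rewrite (big_nat_recr (M.+1)) //= eqxx addr0.
  apply: eq_big_nat => k /andP[_ Hk].
  by rewrite /bump leqNgt Hk /= neq_ltn Hk.
rewrite big_nat_recr //= IH // (big_nat_recr (M.+1)) //=.
congr (_ + _); rewrite /bump.
by move: Hi; rewrite ltnS => Hi; rewrite Hi /= neq_ltn ltnS Hi orbT.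
Qed.

Definition eps (i j : nat) : R := (-1) ^+ (i + j) * (if (i < j)%N then -1 else 1).

Lemma eps_bump i k : (-1) ^+ (i + k) = eps i (bump i k) :> R.
Proof.
rewrite /eps /bump; case: (leqP i k) => H.
  by rewrite /= ltnS H addnS exprS mulrN1 mulN1r opprK.
by rewrite /= ltnNge (ltnW H) mulr1.
Qed.

Lemma eps_sym i j : i != j -> eps j i = - eps i j.
Proof.
rewrite /eps addnC neq_ltn => /orP[H|H].
  by rewrite H ltnNge (ltnW H) mulr1 mulrN1 opprK.
by rewrite H ltnNge (ltnW H) mulr1 mulrN1.
Qed.

Section G.
Variables (T : Type) (x0 : T) (s : seq T).
Definition Dd i j := if (i < j)%N then del i (del j s) else del j (del i s).

Lemma Dd_bump i k : del k (del i s) = Dd i (bump i k).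
Proof.
rewrite /Dd /bump; case: (leqP i k) => H.
  by rewrite /= ltnS H del_del.
by rewrite /= ltnNge (ltnW H).
Qed.

Lemma Dd_sym i j : i != j -> Dd j i = Dd i j.
Proof.
rewrite /Dd neq_ltn => /orP[H|H].
  by rewrite H ltnNge (ltnW H).
by rewrite H ltnNge (ltnW H).
Qed.

Lemma G_aux (Phi : nat -> nat -> R) :
  (forall i k, (-1) ^+ (i + k) * Phi i k = eps i (bump i k) * Phi i k) ->
  \sum_(0 <= i < size s) \sum_(0 <= k < size (del i s)) (-1) ^+ (i + k) * Phi i k = 0.
Abort.

Lemma G (F : T -> T -> seq T -> R) :
  \sum_(0 <= i < size s) \sum_(0 <= k < size (del i s))
     (-1) ^+ (i + k) * F (nth x0 s i) (nth x0 (del i s) k) (del k (del i s))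
  = - \sum_(0 <= i < size s) \sum_(0 <= k < size (del i s))
     (-1) ^+ (i + k) * F (nth x0 (del i s) k) (nth x0 s i) (del k (del i s)).
Proof.
have step : forall (Fi : nat -> nat -> R) i, (i < size s)%N ->
  \sum_(0 <= k < size (del i s)) (-1) ^+ (i + k) * Fi i (bump i k)
  = \sum_(0 <= j < size s) (if j != i then eps i j * Fi i j else 0).
  move=> Fi i Hi; rewrite size_del //.
  under eq_bigr => k _ do rewrite eps_bump.
  rewrite (RB (fun j => eps i j * Fi i j)); first by rewrite prednK // (leq_ltn_trans _ Hi).
  by rewrite -ltnS prednK // (leq_ltn_trans _ Hi).
have L1 : forall i, (0 <= i < size s)%N ->
  \sum_(0 <= k < size (del i s))
     (-1) ^+ (i + k) * F (nth x0 s i) (nth x0 (del i s) k) (del k (del i s))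
  = \sum_(0 <= j < size s) (if j != i then eps i j * F (nth x0 s i) (nth x0 s j) (Dd i j) else 0).
  move=> i /andP[_ Hi]; rewrite -(step (fun i j => F (nth x0 s i) (nth x0 s j) (Dd i j))) //.
  by apply: eq_bigr => k _; rewrite nth_del Dd_bump.
have L2 : forall i, (0 <= i < size s)%N ->
  \sum_(0 <= k < size (del i s))
     (-1) ^+ (i + k) * F (nth x0 (del i s) k) (nth x0 s i) (del k (del i s))
  = \sum_(0 <= j < size s) (if j != i then eps i j * F (nth x0 s j) (nth x0 s i) (Dd i j) else 0).
  move=> i /andP[_ Hi]; rewrite -(step (fun i j => F (nth x0 s j) (nth x0 s i) (Dd i j))) //.
  by apply: eq_bigr => k _; rewrite nth_del Dd_bump.
rewrite (eq_big_nat _ _ L1) (eq_big_nat _ _ L2) exchange_big -sumrN.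
apply: eq_bigr => i _; rewrite -sumrN; apply: eq_bigr => j _.
case: (eqVneq i j) => [->|Hij]; first by rewrite /= oppr0.
by rewrite /= eps_sym // Dd_sym // mulNr.
Qed.
End G.
End Signs.


Section Main.
Variables (R : realFieldType) (n : nat).
Local Open Scope ring_scope.
Local Notation V := 'rV[R]_n.
Local Notation P := (@dprods R n).

Definition bf (h : 'M[R]_n) (x y : V) : R := (x *m h *m y^T) 0 0.

Definition Hd (h : 'M[R]_n) (W : seq V -> seq V -> R) (xs ys : seq V) : R :=
  \sum_(0 <= a < size xs) \sum_(0 <= b < size ys)
    (-1) ^+ (a + b) * bf h (nth 0 xs a) (nth 0 ys b) * W (del a xs) (del b ys).

Lemma sum_card1 N (F : {set 'I_N} -> R) :
  \sum_(A : {set 'I_N} | #|A| == 1%N) F A = \sum_(a < N) F [set a].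
Proof.
rewrite (eq_bigl (fun A => A \in [set [set a] | a : 'I_N])).
  by rewrite big_imset //; move=> x y _ _; apply: set1_inj.
move=> A; apply/cards1P/imsetP => [[x ->]|[x _ ->]]; by exists x.
Qed.

Lemma card_lt N (a : 'I_N) : #|[set b : 'I_N | (b < a)%N]| = a.
Proof.
rewrite -sum1dep_card -(big_ord_widen_cond N xpredT (fun _ => 1%N) (ltnW (ltn_ord a))).
by rewrite sum1_card card_ord.
Qed.

Lemma shuffle1 N (a : 'I_N) : shuffle_sign R [set a] = (-1) ^+ a :> R.
Proof.
rewrite /shuffle_sign; congr (_ ^+ _).
have -> : [set ab : 'I_N * 'I_N | (ab.1 \in [set a]) && (ab.2 \notin [set a]) && (ab.2 < ab.1)%N]
   = [set (a, y) | y in [set b : 'I_N | (b < a)%N]].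
  apply/setP => -[x y]; rewrite inE /=.
  apply/idP/imsetP => [/andP[/andP[] ]|[z]].
    by rewrite !inE => /eqP -> Hy Hlt; exists y => //; rewrite inE.
  by rewrite !inE => Hz [-> ->]; rewrite eqxx Hz andbT; apply: contraTN Hz => /eqP->; rewrite ltnn.
rewrite card_imset ?card_lt //.
by move=> y1 y2 [].
Qed.

Lemma subseq1 (xs : seq V) (a : 'I_(size xs)) : subseq_at xs [set a] = [:: nth 0 xs a].
Proof. by rewrite /subseq_at enum_set1. Qed.

Lemma subseqC1 (xs : seq V) (a : 'I_(size xs)) : subseq_at xs (~: [set a]) = del a xs.
Proof.
rewrite /subseq_at.
have -> : enum (~: [set a]) = filter (predC1 a) (enum 'I_(size xs)).
  rewrite {1}/enum_mem -enumT; apply: eq_filter => x; by rewrite !inE.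
have E : xs = map (fun i : 'I_(size xs) => nth 0 xs i) (enum 'I_(size xs)).
  by rewrite -[LHS](mkseq_nth 0 xs) /mkseq -val_enum_ord -map_comp.
transitivity (del a (map (fun i : 'I_(size xs) => nth 0 xs i) (enum 'I_(size xs)))); last by rewrite -E.
by rewrite -map_del (del_uniq a) ?enum_uniq ?size_enum_ord // nth_ord_enum.
Qed.

Lemma R1 h L xs ys : P (h :: L) xs ys = Hd h (P L) xs ys.
Proof.
rewrite /= /dprod /Hd sum_card1 big_mkord; apply: eq_bigr => a _.
rewrite sum_card1 big_mkord; apply: eq_bigr => b _.
rewrite !shuffle1 !subseq1 !subseqC1 -exprD /bform /=.
by [].
Qed.
End Main.


Section Main2.
Variables (R : realFieldType) (n : nat).
Local Open Scope ring_scope.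
Local Notation V := 'rV[R]_n.
Local Notation P := (@dprods R n).

Lemma E2 a b L xs ys : P (a :: b :: L) xs ys =
  \sum_(0 <= i < size xs) \sum_(0 <= i' < size (del i xs)) (-1) ^+ (i + i') *
   \sum_(0 <= k < size ys) \sum_(0 <= k' < size (del k ys)) (-1) ^+ (k + k') *
    (bf a (nth 0 xs i) (nth 0 ys k) * bf b (nth 0 (del i xs) i') (nth 0 (del k ys) k')
     * P L (del i' (del i xs)) (del k' (del k ys))).
Proof.
rewrite R1 /Hd; apply: eq_bigr => i _.
under eq_bigr => k _ do rewrite R1 /Hd mulr_sumr.
rewrite exchange_big; apply: eq_bigr => i' _.
rewrite mulr_sumr; apply: eq_bigr => k _.
rewrite mulr_sumr mulr_sumr; apply: eq_bigr => k' _.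
rewrite !exprD; ring.
Qed.

Lemma swapP a b L xs ys : P (a :: b :: L) xs ys = P (b :: a :: L) xs ys.
Proof.
rewrite E2 (G 0 xs (fun u v rx =>
   \sum_(0 <= k < size ys) \sum_(0 <= k' < size (del k ys)) (-1) ^+ (k + k') *
    (bf a u (nth 0 ys k) * bf b v (nth 0 (del k ys) k') * P L rx (del k' (del k ys))))).
rewrite E2 -sumrN; apply: eq_bigr => i _; rewrite -sumrN; apply: eq_bigr => i' _.
rewrite (G 0 ys (fun u v ry => bf a (nth 0 (del i xs) i') u * bf b (nth 0 xs i) v *
    P L (del i' (del i xs)) ry)).
rewrite mulrN opprK; congr (_ * _); apply: eq_bigr => k _; apply: eq_bigr => k' _.
congr (_ * _); ring.
Qed.
End Main2.


Section Main3.
Variables (R : realFieldType) (n : nat).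
Local Open Scope ring_scope.
Local Notation V := 'rV[R]_n.
Local Notation P := (@dprods R n).
Local Notation e := (@ebasis R n).

Lemma bf_sum (g h : 'M[R]_n) x y :
  \sum_(j < n) bf g x (e j) * bf h (e j) y = bf (g *m h) x y.
Proof.
rewrite /bf.
have -> : x *m (g *m h) *m y^T = (x *m g) *m (h *m y^T) by rewrite !mulmxA.
rewrite [RHS]mxE; apply: eq_bigr => j _; rewrite /ebasis trmx_delta -colE.
by rewrite -rowE -row_mul !mxE.
Qed.

Lemma bf_tr (h : 'M[R]_n) : \sum_(j < n) bf h (e j) (e j) = \tr h.
Proof.
rewrite /mxtrace; apply: eq_bigr => j _.
by rewrite /bf /ebasis trmx_delta -colE -rowE !mxE.
Qed.

Lemma bf_T (h : 'M[R]_n) (x y : V) : bf h x y = bf h^T y x.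
Proof.
rewrite /bf; transitivity ((x *m h *m y^T)^T 0 0); first by rewrite [RHS]mxE.
by rewrite !trmx_mul trmxK mulmxA.
Qed.

Lemma bf_add (A B : 'M[R]_n) (x y : V) : bf (A + B) x y = bf A x y + bf B x y.
Proof. by rewrite /bf mulmxDr mulmxDl mxE. Qed.

Lemma PT (L : seq 'M[R]_n) (xs ys : seq V) : P L xs ys = P (map trmx L) ys xs.
Proof.
elim: L xs ys => [|h L IH] xs ys; first by [].
have -> : map trmx (h :: L) = h^T :: map trmx L by [].
rewrite !R1 /Hd exchange_big.
apply: eq_bigr => b _; apply: eq_bigr => a _.
by rewrite IH bf_T addnC.
Qed.

Lemma P_addhead (A B : 'M[R]_n) (L : seq 'M[R]_n) (xs ys : seq V) : P ((A + B) :: L) xs ys = P (A :: L) xs ys + P (B :: L) xs ys.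
Proof.
rewrite !R1 /Hd -big_split; apply: eq_bigr => a _; rewrite -big_split; apply: eq_bigr => b _.
by rewrite bf_add mulrDr mulrDl.
Qed.

Lemma Hd_sum (g : 'M[R]_n) I (r : seq I) (W : I -> seq V -> seq V -> R) xs ys :
  Hd g (fun xs ys => \sum_(l <- r) W l xs ys) xs ys = \sum_(l <- r) Hd g (W l) xs ys.
Proof.
symmetry; rewrite /Hd exchange_big; apply: eq_bigr => a _.
rewrite exchange_big; apply: eq_bigr => b _; by rewrite mulr_sumr.
Qed.

Lemma Hd_ext (g : 'M[R]_n) (W W' : seq V -> seq V -> R) (xs ys : seq V) :
  (forall a b, (a < size xs)%N -> (b < size ys)%N -> W (del a xs) (del b ys) = W' (del a xs) (del b ys)) ->
  Hd g W xs ys = Hd g W' xs ys.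
Proof.
move=> H; rewrite /Hd; apply: eq_big_nat => a /andP[_ Ha]; apply: eq_big_nat => b /andP[_ Hb].
by rewrite H.
Qed.

Lemma Hd_cons_y (g : 'M[R]_n) (W : seq V -> seq V -> R) (xs : seq V) (u : V) (s : seq V) :
  Hd g W xs (u :: s) =
  \sum_(0 <= a < size xs) (-1) ^+ a * bf g (nth 0 xs a) u * W (del a xs) s
  - \sum_(0 <= a < size xs) \sum_(0 <= c < size s)
      (-1) ^+ (a + c) * bf g (nth 0 xs a) (nth 0 s c) * W (del a xs) (u :: del c s).
Proof.
rewrite /Hd -sumrB; apply: eq_bigr => a _.
rewrite /= big_nat_recl // addn0 del0 /=; congr (_ + _).
rewrite -sumrN; apply: eq_bigr => c _; rewrite delS addnS exprS; ring.
Qed.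

Lemma Hd_cons_x (g : 'M[R]_n) (W : seq V -> seq V -> R) (u : V) (s ys : seq V) :
  Hd g W (u :: s) ys =
  \sum_(0 <= b < size ys) (-1) ^+ b * bf g u (nth 0 ys b) * W s (del b ys)
  - \sum_(0 <= c < size s) \sum_(0 <= b < size ys)
      (-1) ^+ (c + b) * bf g (nth 0 s c) (nth 0 ys b) * W (u :: del c s) (del b ys).
Proof.
rewrite /Hd /= big_nat_recl // del0 /=; congr (_ + _).
rewrite -sumrN; apply: eq_bigr => c _; rewrite -sumrN; apply: eq_bigr => b _.
rewrite delS addSn exprS; ring.
Qed.

Definition Yop (h : 'M[R]_n) (L : seq 'M[R]_n) (xs ys : seq V) : R := \sum_(0 <= b < size ys) (-1) ^+ b *
  \sum_(j < n) (bf h (e j) (nth 0 ys b) * P L xs (e j :: del b ys)).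

Lemma Ylem (h : 'M[R]_n) (L : seq 'M[R]_n) (xs ys : seq V) : size ys = size L ->
  Yop h L xs ys = \sum_(0 <= l < size L) P ((nth 0 L l *m h) :: del l L) xs ys.
Proof.
elim: L xs ys => [|g L IH] xs ys Hs.
  by rewrite /Yop Hs !big_geq.
have -> : size (g :: L) = (size L).+1 by [].
have n0 : nth 0 (g :: L) 0 = g by [].
have nS : forall l, nth 0 (g :: L) l.+1 = nth 0 L l by [].
rewrite big_nat_recl // del0 n0.
under eq_bigr => l _ do rewrite nS delS -swapP.
pose T1 := \sum_(0 <= b < size ys) (-1) ^+ b * \sum_(j < n) (bf h (e j) (nth 0 ys b) *
   \sum_(0 <= a < size xs) (-1) ^+ a * bf g (nth 0 xs a) (e j) * P L (del a xs) (del b ys)).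
pose T2 := \sum_(0 <= b < size ys) (-1) ^+ b * \sum_(j < n) (bf h (e j) (nth 0 ys b) *
   \sum_(0 <= a < size xs) \sum_(0 <= c < size (del b ys))
     (-1) ^+ (a + c) * bf g (nth 0 xs a) (nth 0 (del b ys) c) * P L (del a xs) (e j :: del c (del b ys))).
have HA : Yop h (g :: L) xs ys = T1 - T2.
  rewrite /Yop /T1 /T2 -sumrB; apply: eq_bigr => b _; rewrite -mulrBr -sumrB; congr (_ * _).
  by apply: eq_bigr => j _; rewrite R1 Hd_cons_y mulrBr.
have HB : T1 = P (g *m h :: L) xs ys.
  transitivity (\sum_(0 <= b < size ys) \sum_(0 <= a < size xs) \sum_(j < n)
     (-1) ^+ (a + b) * (bf g (nth 0 xs a) (e j) * bf h (e j) (nth 0 ys b)) * P L (del a xs) (del b ys)).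
    apply: eq_bigr => b _; rewrite mulr_sumr.
    under eq_bigr => j _ do rewrite mulr_sumr mulr_sumr.
    rewrite exchange_big; apply: eq_bigr => a _; apply: eq_bigr => j _.
    rewrite exprD; ring.
  rewrite R1 /Hd exchange_big; apply: eq_bigr => a _; apply: eq_bigr => b _.
  rewrite -bf_sum mulr_sumr mulr_suml; apply: eq_bigr => j _.
  by [].
pose F a u v r := \sum_(j < n) bf h (e j) u * bf g (nth 0 xs a) v * P L (del a xs) (e j :: r).
have HC1 : T2 = \sum_(0 <= a < size xs) (-1) ^+ a * \sum_(0 <= b < size ys) \sum_(0 <= c < size (del b ys))
     (-1) ^+ (b + c) * F a (nth 0 ys b) (nth 0 (del b ys) c) (del c (del b ys)).
  rewrite /T2 /F.
  transitivity (\sum_(0 <= b < size ys) \sum_(0 <= a < size xs) \sum_(0 <= c < size (del b ys)) \sum_(j < n)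
     (-1) ^+ a * ((-1) ^+ (b + c) * (bf h (e j) (nth 0 ys b) * bf g (nth 0 xs a) (nth 0 (del b ys) c)
        * P L (del a xs) (e j :: del c (del b ys))))).
    apply: eq_bigr => b _; rewrite mulr_sumr.
    under eq_bigr => j _ do rewrite mulr_sumr mulr_sumr.
    rewrite exchange_big; apply: eq_bigr => a _.
    under eq_bigr => j _ do rewrite mulr_sumr mulr_sumr.
    rewrite exchange_big; apply: eq_bigr => c _; apply: eq_bigr => j _.
    rewrite !exprD; ring.
  rewrite exchange_big; apply: eq_bigr => a _; rewrite mulr_sumr; apply: eq_bigr => b _.
  rewrite mulr_sumr; apply: eq_bigr => c _; by rewrite !mulr_sumr.
have HC : T2 = - \sum_(0 <= l < size L) P [:: g, nth 0 L l *m h & del l L] xs ys.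
  rewrite HC1.
  under eq_bigr => a _ do rewrite (G 0 ys (F a)) mulrN.
  rewrite sumrN; congr (- _).
  transitivity (Hd g (Yop h L) xs ys).
    rewrite /Hd; apply: eq_bigr => a _; rewrite mulr_sumr; apply: eq_bigr => b _.
    rewrite /Yop /F !mulr_sumr; apply: eq_bigr => c _; rewrite !mulr_sumr; apply: eq_bigr => j _.
    rewrite !exprD; ring.
  transitivity (Hd g (fun xs ys => \sum_(0 <= l < size L) P (nth 0 L l *m h :: del l L) xs ys) xs ys).
    apply: Hd_ext => a b Ha Hb; apply: IH.
    by rewrite size_del // Hs.
  by rewrite Hd_sum; apply: eq_bigr => l _; rewrite R1.
by rewrite HA HB HC opprK.
Qed.

Definition Xop (h : 'M[R]_n) (L : seq 'M[R]_n) (xs ys : seq V) : R :=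
  \sum_(0 <= a < size xs) (-1) ^+ a *
  \sum_(j < n) (bf h (nth 0 xs a) (e j) * P L (e j :: del a xs) ys).

Lemma Xlem (h : 'M[R]_n) (L : seq 'M[R]_n) (xs ys : seq V) : size xs = size L ->
  Xop h L xs ys = \sum_(0 <= l < size L) P ((h *m nth 0 L l) :: del l L) xs ys.
Proof.
move=> Hs.
transitivity (Yop h^T (map trmx L) ys xs).
  rewrite /Xop /Yop; apply: eq_bigr => a _; congr (_ * _); apply: eq_bigr => j _.
  by rewrite bf_T PT.
rewrite Ylem ?size_map //; apply: eq_big_nat => l /andP[_ Hl].
rewrite [RHS]PT /= map_del (nth_map 0) //.
by rewrite trmx_mul.
Qed.

Lemma Hd_cons_xy (g : 'M[R]_n) (W : seq V -> seq V -> R) (u : V) (xs ys : seq V) :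
  Hd g W (u :: xs) (u :: ys) =
  bf g u u * W xs ys
  - \sum_(0 <= b < size ys) (-1) ^+ b * bf g u (nth 0 ys b) * W xs (u :: del b ys)
  - \sum_(0 <= c < size xs) (-1) ^+ c * bf g (nth 0 xs c) u * W (u :: del c xs) ys
  + \sum_(0 <= c < size xs) \sum_(0 <= b < size ys)
      (-1) ^+ (c + b) * bf g (nth 0 xs c) (nth 0 ys b) * W (u :: del c xs) (u :: del b ys).
Proof.
rewrite Hd_cons_x.
have -> : size (u :: ys) = (size ys).+1 by [].
have nS : forall b, nth 0 (u :: ys) b.+1 = nth 0 ys b by [].
have E1 : \sum_(0 <= b < (size ys).+1) (-1) ^+ b * bf g u (nth 0 (u :: ys) b) * W xs (del b (u :: ys))
   = bf g u u * W xs ys - \sum_(0 <= b < size ys) (-1) ^+ b * bf g u (nth 0 ys b) * W xs (u :: del b ys).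
  rewrite big_nat_recl // del0 expr0 mul1r; congr (_ + _).
  rewrite -sumrN; apply: eq_bigr => b _; rewrite nS delS exprS; ring.
have E2 : \sum_(0 <= c < size xs) \sum_(0 <= b < (size ys).+1)
     (-1) ^+ (c + b) * bf g (nth 0 xs c) (nth 0 (u :: ys) b) * W (u :: del c xs) (del b (u :: ys))
   = \sum_(0 <= c < size xs) (-1) ^+ c * bf g (nth 0 xs c) u * W (u :: del c xs) ys
   - \sum_(0 <= c < size xs) \sum_(0 <= b < size ys)
      (-1) ^+ (c + b) * bf g (nth 0 xs c) (nth 0 ys b) * W (u :: del c xs) (u :: del b ys).
  rewrite -sumrB; apply: eq_bigr => c _.
  rewrite big_nat_recl // del0 addn0; congr (_ + _).
  rewrite -sumrN; apply: eq_bigr => b _; rewrite nS delS addnS exprS; ring.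
rewrite E1 E2; ring.
Qed.
End Main3.

Section Main4.
Variables (R : realFieldType) (n : nat).
Local Open Scope ring_scope.
Local Notation V := 'rV[R]_n.
Local Notation P := (@dprods R n).
Local Notation e := (@ebasis R n).

Definition Cop (L : seq 'M[R]_n) (xs ys : seq V) : R := \sum_(j < n) P L (e j :: xs) (e j :: ys).

Lemma Crec (h : 'M[R]_n) (L : seq 'M[R]_n) (xs ys : seq V) :
  Cop (h :: L) xs ys = \tr h * P L xs ys - Yop h L xs ys - Xop h L xs ys + Hd h (Cop L) xs ys.
Proof.
rewrite /Cop.
under eq_bigr => j _ do rewrite R1 Hd_cons_xy.
rewrite big_split /= !sumrB; congr (_ - _ - _ + _).
- by rewrite -mulr_suml bf_tr.
- rewrite /Yop exchange_big; apply: eq_bigr => b _; rewrite mulr_sumr; apply: eq_bigr => j _.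
  by rewrite !mulrA.
- rewrite /Xop exchange_big; apply: eq_bigr => b _; rewrite mulr_sumr; apply: eq_bigr => j _.
  by rewrite !mulrA.
- rewrite /Hd exchange_big; apply: eq_bigr => a _; rewrite exchange_big; apply: eq_bigr => b _.
  by rewrite mulr_sumr.
Qed.

Lemma Hd_sub (g : 'M[R]_n) (A B : seq V -> seq V -> R) xs ys :
  Hd g (fun xs ys => A xs ys - B xs ys) xs ys = Hd g A xs ys - Hd g B xs ys.
Proof.
rewrite /Hd -sumrB; apply: eq_bigr => a _; rewrite -sumrB; apply: eq_bigr => b _.
by rewrite mulrBr.
Qed.

Lemma Hd_scale (g : 'M[R]_n) c (A : seq V -> seq V -> R) xs ys :
  Hd g (fun xs ys => c * A xs ys) xs ys = c * Hd g A xs ys.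
Proof.
rewrite /Hd mulr_sumr; apply: eq_bigr => a _; rewrite mulr_sumr; apply: eq_bigr => b _.
by rewrite mulrCA.
Qed.

Lemma Hd_if (g : 'M[R]_n) (bb : bool) (A : seq V -> seq V -> R) xs ys :
  Hd g (fun xs ys => if bb then A xs ys else 0) xs ys = if bb then Hd g A xs ys else 0.
Proof.
case: bb => //; rewrite /Hd big1 // => a _; rewrite big1 // => b _; by rewrite mulr0.
Qed.

Definition comp (L : seq 'M[R]_n) i j :=
  bcomp (nth 0 L j) (nth 0 L i) + bcomp (nth 0 L i) (nth 0 L j).

Definition Form (L : seq 'M[R]_n) (xs ys : seq V) : R :=
  \sum_(0 <= i < size L) \tr (nth 0 L i) * P (del i L) xs ys
  - \sum_(0 <= i < size L) \sum_(0 <= j < size L)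
      (if (i < j)%N then P (comp L i j :: del i (del j L)) xs ys else 0).

Lemma MT (L : seq 'M[R]_n) (xs ys : seq V) : (0 < size L)%N ->
  size xs = (size L).-1 -> size ys = (size L).-1 -> Cop L xs ys = Form L xs ys.
Proof.
elim: L xs ys => [|h L IH] xs ys // _ /= Hx Hy.
rewrite Crec Ylem // Xlem //.
have -> : Hd h (Cop L) xs ys = Hd h (Form L) xs ys.
  apply: Hd_ext => a b Ha Hb; apply: IH; rewrite ?size_del //.
  - by rewrite -Hx (leq_ltn_trans (leq0n a) Ha).
  - by rewrite Hx.
  - by rewrite Hy.
have HD : Hd h (Form L) xs ys =
   \sum_(0 <= i < size L) \tr (nth 0 L i) * P (h :: del i L) xs ys
   - \sum_(0 <= i < size L) \sum_(0 <= j < size L)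
      (if (i < j)%N then P (h :: comp L i j :: del i (del j L)) xs ys else 0).
  rewrite /Form Hd_sub !Hd_sum; congr (_ - _); apply: eq_bigr => i _.
    by rewrite Hd_scale R1.
  rewrite Hd_sum; apply: eq_bigr => j _.
  by rewrite Hd_if R1.
rewrite HD /Form.
have -> : size (h :: L) = (size L).+1 by [].
have F1 : \sum_(0 <= i < (size L).+1) \tr (nth 0 (h :: L) i) * P (del i (h :: L)) xs ys
   = \tr h * P L xs ys + \sum_(0 <= i < size L) \tr (nth 0 L i) * P (h :: del i L) xs ys.
  by rewrite big_nat_recl // del0.
have F2 : \sum_(0 <= i < (size L).+1) \sum_(0 <= j < (size L).+1)
    (if (i < j)%N then P (comp (h :: L) i j :: del i (del j (h :: L))) xs ys else 0)
  = \sum_(0 <= j < size L) (P (h *m nth 0 L j :: del j L) xs ys + P (nth 0 L j *m h :: del j L) xs ys)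
    + \sum_(0 <= i < size L) \sum_(0 <= j < size L)
      (if (i < j)%N then P (h :: comp L i j :: del i (del j L)) xs ys else 0).
  rewrite big_nat_recl //; congr (_ + _).
    rewrite big_nat_recl //= add0r; apply: eq_bigr => j _.
    by rewrite /comp /bcomp -P_addhead delS del0.
  apply: eq_bigr => i _; rewrite big_nat_recl // [X in X + _]/= add0r; apply: eq_bigr => j _.
  rewrite ltnS; case: (i < j)%N => //.
  rewrite (_ : comp (h :: L) i.+1 j.+1 = comp L i j) //.
  by rewrite (_ : del i.+1 (del j.+1 (h :: L)) = h :: del i (del j L)) // swapP.
rewrite F1 F2 big_split /=; ring.
Qed.
End Main4.


Local Open Scope ring_scope.

Lemma del_nseq T (x : T) m i : (i < m)%N -> del i (nseq m x) = nseq m.-1 x.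
Proof.
elim: m i => [|m IH] [|i] //= Hi.
  by rewrite del0.
rewrite delS IH //; by case: m {IH} Hi.
Qed.

Lemma pairs_sum (R : comNzRingType) (c : R) m :
  \sum_(0 <= i < m) \sum_(0 <= j < m) (if (i < j)%N then c + c else 0) = (m * m.-1)%:R * c.
Proof.
elim: m => [|m IH]; first by rewrite big_geq // mul0r.
rewrite big_nat_recr //=.
have -> : \sum_(0 <= i < m) \sum_(0 <= j < m.+1) (if (i < j)%N then c + c else 0)
   = \sum_(0 <= i < m) \sum_(0 <= j < m) (if (i < j)%N then c + c else 0) + (m%:R * (c + c)).
  rewrite (eq_big_nat _ _ (F2 := fun i => \sum_(0 <= j < m) (if (i < j)%N then c + c else 0) + (c + c))).
    by rewrite big_split /= sumr_const_nat subn0 mulr_natl.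
  by move=> i /andP[_ Hi]; rewrite big_nat_recr //= Hi.
rewrite IH big1_seq ?addr0.
  have E : (m.+1 * m = m * m.-1 + 2 * m)%N by case: m {IH} => // m; lia.
  rewrite E natrD !natrM; ring.
move=> j /andP[_]; rewrite mem_index_iota => /andP[_ Hj].
by rewrite ltnNge -ltnS Hj.
Qed.

Section Final.
Variables (R : realFieldType) (n : nat).
Local Notation P := (@dprods R n).

Lemma nth_enum_map p (h : 'I_p -> 'M[R]_n) (i : 'I_p) :
  nth 0 [seq h l | l <- enum 'I_p] i = h i.
Proof. by rewrite (nth_map i) ?size_enum_ord // nth_ord_enum. Qed.

Lemma del_enum_map p (h : 'I_p -> 'M[R]_n) (i : 'I_p) :
  del i [seq h l | l <- enum 'I_p] = [seq h l | l <- enum 'I_p & l != i].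
Proof.
rewrite -map_del (del_uniq i) ?enum_uniq ?size_enum_ord //; congr (map _ _); apply: eq_filter => l /=.
by have -> := nth_ord_enum i i.
Qed.

Lemma del2_enum_map p (h : 'I_p -> 'M[R]_n) (i j : 'I_p) : (i < j)%N ->
  del i (del j [seq h l | l <- enum 'I_p]) = [seq h l | l <- enum 'I_p & (l != i) && (l != j)].
Proof.
move=> Hij.
have -> : del i (del j [seq h l | l <- enum 'I_p]) = map h (del i (del j (enum 'I_p))) by rewrite !map_del.
have Hj : (j < size (enum 'I_p))%N by rewrite size_enum_ord.
have Hs : (i < size (del j (enum 'I_p)))%N.
  rewrite size_del // size_enum_ord -ltnS prednK //; last by apply: leq_ltn_trans (ltn_ord j).
  have := ltn_ord j; lia.
have Hu : uniq (del j (enum 'I_p)) by rewrite (del_uniq j) ?enum_uniq // filter_uniq // enum_uniq.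
rewrite (del_uniq i Hu Hs) nth_del.
have -> : bump j i = i by rewrite /bump leqNgt Hij.
rewrite (del_uniq j) ?enum_uniq //.
have -> := nth_ord_enum i i.
have -> := nth_ord_enum j j.
rewrite -filter_predI; congr (map _ _); apply: eq_filter => l /=.
Qed.
End Final.

Theorem mainTheorem13 (R : realFieldType) (n p : nat) :
  (forall h : 'I_p -> 'M[R]_n,
    deq p.-1 p.-1
      (dcontr p p (dprods [seq h i | i <- enum 'I_p]))
      (fun xs ys =>
         \sum_(i < p) \tr (h i) * dprods [seq h l | l <- enum 'I_p & l != i] xs ys
         - \sum_(i < p) \sum_(j < p | (i < j)%N)
             dprods (bcomp (h j) (h i) + bcomp (h i) (h j)
                     :: [seq h l | l <- enum 'I_p & (l != i) && (l != j)]) xs ys))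
  /\
  (forall k : 'M[R]_n,
    deq p.-1 p.-1
      (dcontr p p (dpow k p))
      (fun xs ys =>
         p%:R * \tr k * dpow k p.-1 xs ys
         - (p * p.-1)%:R * dprods (bcomp k k :: nseq p.-2 k) xs ys)).
Proof.
split.
  move=> h xs ys Hx Hy; rewrite /dcontr andbb.
  case: p h xs ys Hx Hy => [|p] h xs ys Hx Hy.
    by rewrite /= !big_ord0 subr0.
  have HL : size [seq h i | i <- enum 'I_p.+1] = p.+1 by rewrite size_map size_enum_ord.
  rewrite /= -/(Cop _ xs ys) MT ?HL // /Form HL.
  congr (_ - _).
    rewrite big_mkord; apply: eq_bigr => i _.
    by rewrite nth_enum_map del_enum_map.
  rewrite big_mkord; apply: eq_bigr => i _.
  rewrite big_mkord [RHS]big_mkcond; apply: eq_bigr => j _.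
  case: ifP => // Hij.
  by rewrite /comp !nth_enum_map del2_enum_map.
move=> k xs ys Hx Hy; rewrite /dcontr andbb /dpow.
case: p xs ys Hx Hy => [|p] xs ys Hx Hy.
  by rewrite /= !mul0r subr0.
transitivity (Cop (nseq p.+1 k) xs ys); first by [].
rewrite MT ?size_nseq // /Form size_nseq.
congr (_ - _).
  rewrite (eq_big_nat _ _ (F2 := fun _ => \tr k * dprods (nseq p k) xs ys)).
    by rewrite sumr_const_nat subn0 mulr_natl mulrnAl.
  move=> i /andP[_ Hi]; by rewrite nth_nseq Hi del_nseq.
rewrite -pairs_sum; apply: eq_big_nat => i /andP[_ Hi]; apply: eq_big_nat => j /andP[_ Hj].
case: ifP => // Hij.
rewrite /comp !nth_nseq Hi Hj del_nseq // del_nseq; last first.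
  by rewrite /=; lia.
exact: P_addhead.
Qed.
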